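(* Let $k_{\mathcal{Z}}$ and $k_{\mathcal{Y}}$ be strictly positive definite kernels on $\mathcal{Z}$ and $\mathcal{Y}=\{\bm{e}_1,\dots,\bm{e}_c\}\subset\mathbb{R}^c$, and let $\varepsilon>0$. Let $(\bm{z}_i,\bm{y}_i)_{i=1}^n$ be observations with $\bm{z}_1,\dots,\bm{z}_n\in\mathcal{Z}$ pairwise distinct and $\bm{y}_i\in\mathcal{Y}$, where every element of $\mathcal{Y}$ occurs among the $\bm{y}_i$. Let $\bm{K}_{ij}=k_{\mathcal{Z}}(\bm{z}_i,\bm{z}_j)$, $\bm{L}_{ij}=k_{\mathcal{Y}}(\bm{y}_i,\bm{y}_j)$, $\tilde{\bm{L}}=\varepsilon n\bm{I}_n+\bm{L}$, and for $y\in\mathcal{Y}$ let $\bm{L}_y=(k_{\mathcal{Y}}(\bm{y}_1,y),\dots,k_{\mathcal{Y}}(\bm{y}_n,y))^T$ (the column of $\bm{L}$ indexed by any $i$ with $\bm{y}_i=y$). Define the empirical conditional mean embeddings $\hat{\mu}_{Z|y}=\bm{\Phi}\tilde{\bm{L}}^{-1}\bm{L}_y\in\mathcal{H}_{\mathcal{Z}}$, where $\bm{\Phi}=(\phi(\bm{z}_1),\dots,\phi(\bm{z}_n))$, and $$\hat{D}(y_i,y_j)=\mathrm{MCMD}(\hat{P}_{Z|y_i},\hat{P}_{Z|y_j})=\|\hat{\mu}_{Z|y_i}-\hat{\mu}_{Z|y_j}\|_{\mathcal{H}_{\mathcal{Z}}}=\sqrt{(\bm{L}_{y_i}-\bm{L}_{y_j})^T\tilde{\bm{L}}^{-1}\bm{K}\tilde{\bm{L}}^{-1}(\bm{L}_{y_i}-\bm{L}_{y_j})}.$$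 Then $\hat{D}$ is a metric on $\mathcal{Y}$.
   Context: $\mathcal{H}_{\mathcal{Z}}$ is the RKHS of $k_{\mathcal{Z}}$ with feature map $\phi(z)=k_{\mathcal{Z}}(z,\cdot)$. A kernel is strictly positive definite if its Gram matrix on any finite set of pairwise distinct points is positive definite. $\bm{e}_i$ denotes the $i$-th standard basis vector of $\mathbb{R}^c$ (one-hot labels). *)

(* Defs.v *)
From HB Require Import structures.
From mathcomp Require Import all_boot all_order all_algebra.
Set Implicit Arguments. Unset Strict Implicit. Unset Printing Implicit Defensive.
Import Order.TTheory GRing.Theory Num.Theory.
Local Open Scope ring_scope.

Definition gram (R : ringType) (T : Type) (k : T -> T -> R) (m : nat)
  (pts : 'I_m -> T) : 'M[R]_m := \matrix_(i, j) k (pts i) (pts j).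

Definition posdef_mx (R : numDomainType) (m : nat) (A : 'M[R]_m) : Prop :=
  A^T = A /\ forall v : 'cV[R]_m, v != 0 -> 0 < (v^T *m A *m v) 0 0.

Definition spd_kernel_on (R : numDomainType) (T : Type) (D : T -> Prop)
  (k : T -> T -> R) : Prop :=
  (forall x y, D x -> D y -> k x y = k y x) /\
  forall (m : nat) (pts : 'I_m -> T),
    (forall i, D (pts i)) -> injective pts -> posdef_mx (gram k pts).

Definition onehot (R : ringType) (c : nat) (v : 'rV[R]_c) : Prop :=
  exists i : 'I_c, v = delta_mx 0 i.

Definition metric_on (R : numDomainType) (T : Type) (D : T -> Prop)
  (d : T -> T -> R) : Prop :=
  (forall x y, D x -> D y -> 0 <= d x y) /\
  (forall x y, D x -> D y -> (d x y = 0 <-> x = y)) /\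
  (forall x y, D x -> D y -> d x y = d y x) /\
  (forall x y z, D x -> D y -> D z -> d x z <= d x y + d y z).

Definition Lvec (R : ringType) (T : Type) (kY : T -> T -> R) (n : nat)
  (ys : 'I_n -> T) (y : T) : 'cV[R]_n := \col_i kY (ys i) y.

Definition Ltilde (R : ringType) (T : Type) (kY : T -> T -> R) (n : nat)
  (ys : 'I_n -> T) (eps : R) : 'M[R]_n :=
  (eps * n%:R)%:M + gram kY ys.

Definition Dhat (R : rcfType) (Z T : Type) (kZ : Z -> Z -> R)
  (kY : T -> T -> R) (eps : R) (n : nat) (zs : 'I_n -> Z) (ys : 'I_n -> T)
  (y y' : T) : R :=
  let Lt := invmx (Ltilde kY ys eps) in
  let u := Lvec kY ys y - Lvec kY ys y' in
  Num.sqrt ((u^T *m Lt *m gram kZ zs *m Lt *m u) 0 0).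

(* Main.v *)
Require Import Defs.
From HB Require Import structures.
From mathcomp Require Import all_boot all_order all_algebra.
From mathcomp Require Import ring lra.
Import Order.TTheory GRing.Theory Num.Theory.
Local Open Scope ring_scope.

Set Implicit Arguments. Unset Strict Implicit.
Section QF.
Variables (R : rcfType) (m : nat) (K : 'M[R]_m).
Hypothesis hK : posdef_mx K.

Definition bf (x y : 'cV[R]_m) := (x^T *m K *m y) 0 0.

Lemma bfDl x y z : bf (x + y) z = bf x z + bf y z.
Proof. by rewrite /bf linearD /= !mulmxDl mxE. Qed.
Lemma bfDr x y z : bf x (y + z) = bf x y + bf x z.
Proof. by rewrite /bf !mulmxDr mxE. Qed.
Lemma bfZl a x y : bf (a *: x) y = a * bf x y.
Proof. by rewrite /bf linearZ /= -!scalemxAl mxE. Qed.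
Lemma bfZr a x y : bf x (a *: y) = a * bf x y.
Proof. by rewrite /bf -!scalemxAr mxE. Qed.
Lemma bfNr x y : bf x (- y) = - bf x y.
Proof. by rewrite -scaleN1r bfZr mulN1r. Qed.
Lemma bfNl x y : bf (- x) y = - bf x y.
Proof. by rewrite -scaleN1r bfZl mulN1r. Qed.
Lemma bf_sym x y : bf x y = bf y x.
Proof.
rewrite /bf -[LHS]/(fun_of_matrix (x^T *m K *m y) 0 0) -[in LHS](trmxK (x^T *m K *m y)).
rewrite [in LHS]mxE.
by rewrite !trmx_mul trmxK hK.1 mulmxA.
Qed.
Lemma bf_ge0 x : 0 <= bf x x.
Proof.
have [->|nz] := eqVneq x 0.
  by rewrite /bf mulmx0 mxE.
exact: ltW (hK.2 x nz).
Qed.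
Lemma bf_eq0 x : bf x x = 0 -> x = 0.
Proof.
move=> h; apply/eqP; apply/negPn/negP => nz.
by have := hK.2 x nz; rewrite -/(bf x x) h ltxx.
Qed.
Lemma bf_CS x y : bf x y ^+ 2 <= bf x x * bf y y.
Proof.
have [->|nz] := eqVneq y 0.
  by rewrite /bf !mulmx0 mxE expr0n mulr0.
have hb : 0 < bf y y by exact: hK.2.
set a := bf x y; set A := bf x x; set b := bf y y.
have := bf_ge0 (b *: x - a *: y).
rewrite bfDl !bfDr !bfNl !bfNr !bfZl !bfZr (bf_sym y x) -/a -/A -/b.
move=> h.
have : 0 <= b * (A * b - a ^+ 2) by rewrite -[X in _ <= X]opprK; nra.
by rewrite pmulr_rge0 // subr_ge0.
Qed.
Lemma bf_tri x y :
  Num.sqrt (bf (x + y) (x + y)) <= Num.sqrt (bf x x) + Num.sqrt (bf y y).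
Proof.
rewrite -(@ler_pXn2r _ 2) ?nnegrE ?addr_ge0 ?sqrtr_ge0 //.
rewrite sqr_sqrtr ?bf_ge0 // bfDl !bfDr (bf_sym y x).
rewrite sqrrD !sqr_sqrtr ?bf_ge0 //.
have h1 := bf_CS x y.
have hs : bf x y <= Num.sqrt (bf x x) * Num.sqrt (bf y y).
  rewrite -sqrtrM ?bf_ge0 //.
  have [hn|hp] := lerP (bf x y) 0.
    exact: le_trans hn (sqrtr_ge0 _).
  by rewrite -(ger0_norm (ltW hp)) -sqrtr_sqr ler_sqrt ?mulr_ge0 ?bf_ge0.
lra.
Qed.
End QF.

Lemma entry_delta (R : pzRingType) m n (A : 'M[R]_(m, n)) k l :
  A k l = (delta_mx (0 : 'I_1) k *m A *m delta_mx l (0 : 'I_1)) 0 0.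
Proof. by rewrite -rowE -colE !mxE. Qed.

Lemma delta_inj (R : nzRingType) c : injective (fun a : 'I_c => delta_mx 0 a : 'rV[R]_c).
Proof.
move=> a b /= /matrixP /(_ 0 a); rewrite !mxE !eqxx /=.
by case: eqP => // _ /eqP; rewrite oner_eq0.
Qed.

Lemma vTv_gt0 (R : realFieldType) n (v : 'cV[R]_n) : v != 0 -> 0 < (v^T *m v) 0 0.
Proof.
move=> nz.
case: (boolP [exists i, v i 0 != 0]) => [/existsP [i hi]|/existsPn h]; last first.
  move/negP: nz; case; apply/eqP/matrixP => i j; rewrite (ord1 j) mxE; by move: (h i); rewrite negbK => /eqP.
rewrite mxE (bigD1 i) //=.
have h1 : 0 <= \sum_(j | j != i) v^T 0 j * v j 0.
  by apply: sumr_ge0 => j _; rewrite mxE -expr2 sqr_ge0.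
have h2 : 0 < v^T 0 i * v i 0.
  by rewrite mxE -expr2 lt_neqAle sqr_ge0 andbT eq_sym sqrf_eq0.
lra.
Qed.

Lemma posdef_unit (R : realFieldType) n (A : 'M[R]_n) :
  (forall v : 'cV[R]_n, v != 0 -> 0 < (v^T *m A *m v) 0 0) -> A \in unitmx.
Proof.
move=> pd; rewrite unitmxE unitfE; apply/negP => /det0P [v nz hv].
have := pd (v^T); rewrite trmx_eq0 => /(_ nz).
by rewrite trmxK hv mul0mx mxE ltxx.
Qed.

Unset Implicit Arguments. Set Strict Implicit.

Theorem theorem4 (R : rcfType) (Z : Type) (c : nat)
  (kZ : Z -> Z -> R) (kY : 'rV[R]_c -> 'rV[R]_c -> R) (eps : R)
  (n : nat) (zs : 'I_n -> Z) (ys : 'I_n -> 'rV[R]_c) :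
  spd_kernel_on (fun _ : Z => True) kZ ->
  spd_kernel_on (@onehot R c) kY ->
  0 < eps ->
  injective zs ->
  (forall i, onehot (ys i)) ->
  (forall y, onehot y -> exists i, ys i = y) ->
  metric_on (@onehot R c) (Dhat kZ kY eps zs ys).
Proof.
move=> [kZs kZpd] [kYs kYpd] heps zinj yoh ysurj.
set K := gram kZ zs.
have hK : posdef_mx K := kZpd n zs (fun=> I) zinj.
pose E := fun a : 'I_c => delta_mx 0 a : 'rV[R]_c.
have Einj : injective E := @delta_inj R c.
have Eoh : forall a, onehot (E a) by move=> a; exists a.
have hG : posdef_mx (gram kY E) := kYpd c E Eoh Einj.
set L := gram kY ys.
pose P : 'M[R]_(c, n) := \matrix_(a, k) ((ys k == E a)%:R).
have hcol : forall k a, ys k = E a -> P *m delta_mx k (0 : 'I_1) = delta_mx a (0 : 'I_1).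
  move=> k a hk; rewrite -colE; apply/matrixP => i j.
  by rewrite !mxE (ord1 j) eqxx andbT hk (inj_eq Einj) eq_sym.
have hrow : forall k a, ys k = E a -> delta_mx (0 : 'I_1) k *m P^T = delta_mx (0 : 'I_1) a.
  by move=> k a hk; rewrite -trmx_delta -trmx_mul (hcol k a hk) trmx_delta.
have hL : L = P^T *m gram kY E *m P.
  apply/matrixP => k l; rewrite [RHS]entry_delta.
  have [a ha] := yoh k; have [b hb] := yoh l.
  rewrite !mulmxA (hrow k a ha) -mulmxA (hcol l b hb) -entry_delta !mxE ha hb //.
have Lpsd : forall v : 'cV[R]_n, 0 <= (v^T *m L *m v) 0 0.
  move=> v; rewrite hL.
  have -> : v^T *m (P^T *m gram kY E *m P) *m v = (P *m v)^T *m gram kY E *m (P *m v) by rewrite trmx_mul !mulmxA.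
  exact: (bf_ge0 hG (P *m v)).
set Lt := Ltilde kY ys eps.
have LT : L^T = L.
  apply/matrixP => k l; rewrite !mxE; apply: kYs; exact: yoh.
have LtT : Lt^T = Lt by rewrite /Lt /Ltilde linearD /= tr_scalar_mx LT.
have Ltpd : forall v : 'cV[R]_n, v != 0 -> 0 < (v^T *m Lt *m v) 0 0.
  move=> v nz.
  have n0 : (0 < n)%N.
    case: n v nz {zs ys yoh ysurj K hK L P hcol hrow hL Lpsd Lt LT LtT zinj kZpd} => // v nz.
    by case/negP: nz; apply/eqP/matrixP => -[].
  rewrite /Lt /Ltilde mulmxDr mulmxDl mxE mul_mx_scalar -scalemxAl mxE.
  have := vTv_gt0 nz; have := Lpsd v.
  have : 0 < eps * n%:R by rewrite mulr_gt0 // ltr0n.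
  move=> h1 h2 h3; rewrite -/L; have := mulr_gt0 h1 h3; lra.
have Ltu : Lt \in unitmx := posdef_unit Ltpd.
set B := invmx Lt.
have BT : B^T = B by rewrite /B trmx_inv LtT.
have Dform : forall y y', Dhat kZ kY eps zs ys y y' =
   Num.sqrt (bf K (B *m (Lvec kY ys y - Lvec kY ys y')) (B *m (Lvec kY ys y - Lvec kY ys y'))).
  by move=> y y'; rewrite /Dhat /bf trmx_mul BT !mulmxA.
have Linj : forall y y', onehot y -> onehot y' -> Lvec kY ys y = Lvec kY ys y' -> y = y'.
  move=> y y' [a ->] [b ->] h.
  have [->//|ab] := eqVneq a b.
  have [k hk] := ysurj _ (Eoh a); have [l hl] := ysurj _ (Eoh b).
  have e1 := congr1 (fun v : 'cV[R]_n => v k 0) h; have e2 := congr1 (fun v : 'cV[R]_n => v l 0) h.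
  rewrite /= !mxE hk hl in e1 e2.
  have nz : (delta_mx a (0 : 'I_1) - delta_mx b (0 : 'I_1) : 'cV[R]_c) != 0.
    apply/negP => /eqP /matrixP /(_ a 0); rewrite !mxE !eqxx (negbTE ab) /=.
    by move/eqP; rewrite subr0 oner_eq0.
  have := hG.2 _ nz.
  have -> : (delta_mx a (0 : 'I_1) - delta_mx b (0 : 'I_1) : 'cV[R]_c)^T = delta_mx 0 a - delta_mx 0 b.
    by apply/matrixP => i j; rewrite !mxE ![(i == 0) && _]andbC.
  have se : forall M N : 'M[R]_1, (M - N) 0 0 = M 0 0 - N 0 0 by move=> M N; rewrite !mxE.
  rewrite !mulmxBr !mulmxBl !se -!entry_delta !mxE.
  rewrite -/(E a) -/(E b) => hpos; exfalso.
  move: e1 e2; rewrite -/(E a) -/(E b) => e1 e2.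
  have s := kYs (E a) (E b) (Eoh a) (Eoh b); lra.
split; [|split; [|split]].
- by move=> y y' _ _; rewrite Dform sqrtr_ge0.
- move=> y y' hy hy'; split; last first.
    by move=> ->; rewrite Dform subrr mulmx0 /bf mulmx0 mxE sqrtr0.
  rewrite Dform => /eqP; rewrite sqrtr_eq0 => hle.
  have h0 : bf K (B *m (Lvec kY ys y - Lvec kY ys y')) (B *m (Lvec kY ys y - Lvec kY ys y')) = 0.
    by apply/eqP; rewrite eq_le hle bf_ge0.
  move/(bf_eq0 hK): h0 => h0.
  apply: Linj => //; apply/eqP; rewrite -subr_eq0; apply/eqP.
  by rewrite -(mulKVmx Ltu (Lvec kY ys y - Lvec kY ys y')) -/B h0 mulmx0.
- move=> y y' _ _; rewrite !Dform -opprB mulmxN bfNl bfNr opprK //.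
- move=> x y z _ _ _; rewrite !Dform.
  have -> : Lvec kY ys x - Lvec kY ys z = (Lvec kY ys x - Lvec kY ys y) + (Lvec kY ys y - Lvec kY ys z).
    by rewrite addrA subrK.
  rewrite mulmxDr; exact: bf_tri.
Qed.
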